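(* Assume the setting and algorithm described in the context. If $0<\alpha\le\frac{\sqrt n}{\sqrt{8m}\,L}$, then for all $k\ge0$, almost surely, $$\mathbb E\big[t^{k+1}\,|\,\mathcal F^k\big]\le\Big(1-\frac1{4m}\Big)t^k+16m\alpha^2L\big(F(\bar x^k)-F^*\big)+\Big(8m\alpha^2L^2+\frac9{4m}\Big)\frac1n\|x^k-Jx^k\|^2 .$$
   Context: Setting. Let $n,m,p\ge1$ be integers and $\mathcal V=\{1,\dots,n\}$. For each $i\in\mathcal V$ and $j\in\{1,\dots,m\}$, $f_{i,j}:\mathbb R^p\to\mathbb R$ is differentiable and $L$-smooth for some $L>0$, i.e. $\|\nabla f_{i,j}(x)-\nabla f_{i,j}(y)\|\le L\|x-y\|$ for all $x,y\in\mathbb R^p$. Let $f_i:=\frac1m\sum_{j=1}^m f_{i,j}$ and $F:=\frac1n\sum_{i=1}^n f_i$, and assume $F^*:=\inf_{x\in\mathbb R^p}F(x)>-\infty$. Let $\underline W=(\underline w_{ir})\in\mathbb R^{n\times n}$ be a nonnegative, primitive, doubly stochastic matrix ($\underline W\mathbf 1_n=\mathbf 1_n$, $\mathbf 1_n^\top\underline W=\mathbf 1_n^\top$), and let $\lambda\in[0,1)$ be its second largest singular value. Any expression with $\lambda$ in a denominator is read as $+\infty$ when $\lambda=0$. Algorithm GT-SAGA with step-size $\alpha>0$: fix a deterministic $\bar x^0\in\mathbb R^p$; for all $i\in\mathcal V$ set $x_i^0=\bar x^0$, $z_{i,j}^0=x_i^0$ for all $j$, $y_i^0=0$, $g_i^{-1}=0$.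 For $k=0,1,2,\dots$ and every $i\in\mathcal V$: draw $\tau_i^k$ uniformly from $\{1,\dots,m\}$; set $g_i^k=\nabla f_{i,\tau_i^k}(x_i^k)-\nabla f_{i,\tau_i^k}(z_{i,\tau_i^k}^k)+\frac1m\sum_{j=1}^m\nabla f_{i,j}(z_{i,j}^k)$; set $y_i^{k+1}=\sum_{r=1}^n\underline w_{ir}(y_r^k+g_r^k-g_r^{k-1})$; set $x_i^{k+1}=\sum_{r=1}^n\underline w_{ir}(x_r^k-\alpha y_r^{k+1})$; draw $s_i^k$ uniformly from $\{1,\dots,m\}$; set $z_{i,j}^{k+1}=x_i^k$ if $j=s_i^k$ and $z_{i,j}^{k+1}=z_{i,j}^k$ otherwise. The family $\{\tau_i^k,s_i^k: i\in\mathcal V,k\ge0\}$ is independent. Notation. $x^k,y^k,g^k\in\mathbb R^{np}$ stack the $x_i^k$, $y_i^k$, $g_i^k$; $\nabla\mathbf f(x^k)\in\mathbb R^{np}$ stacks $\nabla f_i(x_i^k)$, $i=1,\dots,n$; $W=\underline W\otimes I_p$, $J=(\frac1n\mathbf 1_n\mathbf 1_n^\top)\otimes I_p$; $\bar x^k=\frac1n\sum_i x_i^k$, $\bar g^k=\frac1n\sum_i g_i^k$, $\overline{\nabla\mathbf f}(x^k)=\frac1n\sum_i\nabla f_i(x_i^k)$. $\mathcal F^0$ is the trivial $\sigma$-algebra and $\mathcal F^k=\sigma(\{\tau_i^t,s_i^t:i\in\mathcal V,\ t\le k-1\})$ for $k\ge1$. $t^k:=\frac1n\sum_{i=1}^n\frac1m\sum_{j=1}^m\|\bar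 x^k-z_{i,j}^k\|^2$. $\|\nabla\mathbf f(x^0)\|^2:=\sum_{i=1}^n\|\nabla f_i(\bar x^0)\|^2$. Norms are Euclidean (spectral for matrices); vector and matrix inequalities are entrywise. *)

(* Defs.v *)
From HB Require Import structures.
From mathcomp Require Import all_boot all_order all_algebra.
From mathcomp Require Import all_classical all_reals all_analysis.
Set Implicit Arguments. Unset Strict Implicit. Unset Printing Implicit Defensive.
Import Order.TTheory GRing.Theory Num.Theory.
Import numFieldNormedType.Exports.
Local Open Scope ring_scope.
Local Open Scope classical_set_scope.

Section GTSAGA.
Variables (R : realType) (n m p : nat).

Definition sqnorm (v : 'rV[R]_p) : R := \sum_(l < p) (v 0 l) ^+ 2.
Definition enorm (v : 'rV[R]_p) : R := Num.sqrt (sqnorm v).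
Definition dotv (u v : 'rV[R]_p) : R := \sum_(l < p) u 0 l * v 0 l.

Definition mxpow (W : 'M[R]_n) (k : nat) : 'M[R]_n := iter k (mulmx W) 1%:M.

Definition nonneg_mx (W : 'M[R]_n) := forall i j, 0 <= W i j.
Definition doubly_stochastic (W : 'M[R]_n) :=
  (forall i, \sum_(j < n) W i j = 1) /\ (forall j, \sum_(i < n) W i j = 1).
Definition primitive_mx (W : 'M[R]_n) :=
  exists k, (0 < k)%N /\ forall i j, 0 < mxpow W k i j.

Definition Fobj (f : 'I_n -> 'I_m -> 'rV[R]_p -> R) (x : 'rV[R]_p) : R :=
  n%:R^-1 * \sum_(i < n) (m%:R^-1 * \sum_(j < m) f i j x).

(* state of GT-SAGA at iteration k: x_i^k, y_i^k, g_i^{k-1}, z_{i,j}^k *)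
Record state := State {
  sx : 'I_n -> 'rV[R]_p;
  sy : 'I_n -> 'rV[R]_p;
  sg : 'I_n -> 'rV[R]_p;
  sz : 'I_n -> 'I_m -> 'rV[R]_p }.

(* the random draws at one iteration: (tau_i^k)_i and (s_i^k)_i *)
Definition draw := ({ffun 'I_n -> 'I_m} * {ffun 'I_n -> 'I_m})%type.

Definition init_state (x0 : 'rV[R]_p) : state :=
  State (fun _ => x0) (fun _ => 0) (fun _ => 0) (fun _ _ => x0).

Definition step (gf : 'I_n -> 'I_m -> 'rV[R]_p -> 'rV[R]_p) (W : 'M[R]_n)
  (alpha : R) (st : state) (d : draw) : state :=
  let tau := d.1 in let s := d.2 in
  let g i := gf i (tau i) (sx st i) - gf i (tau i) (sz st i (tau i))
             + m%:R^-1 *: \sum_(j < m) gf i j (sz st i j) in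
  let y' i := \sum_(r < n) W i r *: (sy st r + g r - sg st r) in
  let x' i := \sum_(r < n) W i r *: (sx st r - alpha *: y' r) in
  let z' i j := if j == s i then sx st i else sz st i j in
  State x' y' g z'.

Fixpoint gt_saga gf W alpha x0 (omega : nat -> draw) (k : nat) : state :=
  match k with
  | 0 => init_state x0
  | k'.+1 => step gf W alpha (gt_saga gf W alpha x0 omega k') (omega k')
  end.

Definition xbar (st : state) : 'rV[R]_p := n%:R^-1 *: \sum_(i < n) sx st i.

Definition tk (st : state) : R :=
  n%:R^-1 * \sum_(i < n) (m%:R^-1 * \sum_(j < m) sqnorm (xbar st - sz st i j)).

Definition consensus_err (st : state) : R :=
  \sum_(i < n) sqnorm (sx st i - xbar st).

(* Conditional expectation given F^k of a random variable Y that depends on the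
   draws omega 0, ..., omega k only: since the draws are independent and
   uniform (the draw at time k is uniform on the finite set [draw]), it is the
   average over the draw at time k, the history omega 0..k-1 being fixed. *)
Definition cond_exp_next (k : nat) (Y : (nat -> draw) -> R) (omega : nat -> draw) : R :=
  (#|{: draw}|%:R)^-1 *
  \sum_(d : draw) Y (fun t => if t == k then d else omega t).

End GTSAGA.

(* Main.v *)
Require Import Defs.
From HB Require Import structures.
From mathcomp Require Import all_boot all_order all_algebra.
From mathcomp Require Import all_classical all_reals all_analysis.
From mathcomp Require Import ring lra.
Import Order.TTheory GRing.Theory Num.Theory.
Import numFieldNormedType.Exports.
Local Open Scope ring_scope.

Lemma final_arith (R : realType) (M N L a2 C T D G V E : R) :
 1 <= M -> 1 <= N -> 0 < L -> 0 <= a2 -> 8 * M * L^+2 * a2 <= N ->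
 0 <= C -> 0 <= T -> 0 <= D -> 0 <= G -> 0 <= V ->
 E <= M^-1 * (9/4 * C + 9/5 * a2 * G + a2 * V)
      + (1 - M^-1) * ((1 + (2*M)^-1) * T + (1 + 2*M) * a2 * G + a2 * V) ->
 V <= N^-1 * L^+2 * (2 * C + 2 * T) ->
 G <= 2 * L^+2 * C + 8 * L * D ->
 E <= (1 - (4 * M)^-1) * T + 16 * M * a2 * L * D
      + (8 * M * a2 * L^+2 + 9 / (4 * M)) * C.
Proof.
move=> M1 N1 L0 a0 hA C0 T0 D0 G0 V0 hE hV hG.
have M0 : 0 < M by lra.
have N0 : 0 < N by lra.
set r := M^-1.
have r0 : 0 < r by rewrite invr_gt0.
have Mr : M * r = 1 by rewrite mulfV ?gt_eqF.
have r1 : r <= 1 by rewrite invr_le1 ?unitf_gt0.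
set s := N^-1.
have s0 : 0 < s by rewrite invr_gt0.
have Ns : N * s = 1 by rewrite mulfV ?gt_eqF.
have s1 : s <= 1 by rewrite invr_le1 ?unitf_gt0.
have e2M : (2 * M)^-1 = r / 2 by rewrite invfM mulrC.
have e4M : (4 * M)^-1 = r / 4 by rewrite invfM mulrC.
have e94 : 9 / (4 * M) = 9 / 4 * r by rewrite invfM mulrA.
rewrite e94 e4M; rewrite e2M in hE.
set q := a2 * L^+2.
have q0 : 0 <= q by rewrite mulr_ge0 ?sqr_ge0.
have qs : q * s <= r / 8.
  have : q * 8 * M <= N by rewrite /q; lra.
  move=> h; have h2 : q * 8 * M * (s * r) <= N * (s * r).
    by rewrite ler_wpM2r // mulr_ge0 // ltW.
  have -> : q * s = q * 8 * M * (s * r) / 8.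
    by rewrite /r; field; rewrite gt_eqF.
  rewrite ler_pdivrMr //; apply: le_trans h2 _.
  by rewrite mulrA Ns mul1r; lra.
have qs2 : q * s <= q by rewrite -[X in _ <= X]mulr1 ler_wpM2l.
have hV2 : a2 * V <= 2 * (q * s) * C + 2 * (q * s) * T.
  apply: le_trans (ler_wpM2l a0 hV) _; rewrite /q /s; lra.
have hV3 : a2 * V <= 2 * q * C + r / 4 * T.
  have h1 : 2 * (q * s) * C <= 2 * q * C by nra.
  have h2 : 2 * (q * s) * T <= r / 4 * T by nra.
  lra.
have K : 9/5 * r + (1 - r) * (1 + 2 * M) <= 2 * M by nra.
have hG2 : a2 * G * (9/5 * r + (1 - r) * (1 + 2 * M)) <= 2 * M * a2 * G.
  have : 0 <= a2 * G by rewrite mulr_ge0.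
  nra.
have hG3 : 2 * M * a2 * G <= 2 * M * a2 * (2 * L^+2 * C + 8 * L * D).
  by rewrite ler_wpM2l // mulr_ge0 // mulr_ge0 // ltW.
have hE2 : E <= r * (9/4) * C + (1 - r) * (1 + r / 2) * T
        + a2 * G * (9/5 * r + (1 - r) * (1 + 2 * M)) + a2 * V.
  apply: le_trans hE _; rewrite -/r.
  have -> : r * (9 / 4 * C + 9 / 5 * a2 * G + a2 * V) +
    (1 - r) * ((1 + r / 2) * T + (1 + 2 * M) * a2 * G + a2 * V) =
    r * (9/4) * C + (1 - r) * (1 + r / 2) * T
        + a2 * G * (9/5 * r + (1 - r) * (1 + 2 * M)) + a2 * V by ring.
  done.
have hT : (1 - r) * (1 + r / 2) * T + r / 4 * T <= (1 - r / 4) * T.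
  rewrite -mulrDl ler_wpM2r //; nra.
have hC : 2 * q * C <= 2 * M * q * C.
  have : 0 <= q * C by rewrite mulr_ge0.
  nra.
have e3 : 2 * M * a2 * (2 * L^+2 * C + 8 * L * D) = 4 * M * q * C + 16 * M * a2 * L * D.
  by rewrite /q; ring.
rewrite /q in hC e3 hV3.
have : 0 <= M * (a2 * L^+2) * C by rewrite !mulr_ge0 ?sqr_ge0 // ltW.
lra.
Qed.

Set Implicit Arguments. Unset Strict Implicit. Unset Printing Implicit Defensive.

Section Vec.
Variables (R : realType) (p : nat).
Implicit Types (u v w : 'rV[R]_p) (a c : R).

Lemma sqnormE v : sqnorm v = dotv v v.
Proof. by rewrite /sqnorm /dotv; apply: eq_bigr => l _; rewrite expr2. Qed.
Lemma dotvC u v : dotv u v = dotv v u.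
Proof. by apply: eq_bigr => l _; rewrite mulrC. Qed.
Lemma dotvDl u v w : dotv (u + v) w = dotv u w + dotv v w.
Proof. by rewrite /dotv -big_split; apply: eq_bigr => l _; rewrite mxE mulrDl. Qed.
Lemma dotvDr u v w : dotv w (u + v) = dotv w u + dotv w v.
Proof. by rewrite dotvC dotvDl !(dotvC w). Qed.
Lemma dotvZl a u v : dotv (a *: u) v = a * dotv u v.
Proof. by rewrite /dotv mulr_sumr; apply: eq_bigr => l _; rewrite mxE mulrA. Qed.
Lemma dotvZr a u v : dotv v (a *: u) = a * dotv v u.
Proof. by rewrite dotvC dotvZl dotvC. Qed.
Lemma dotvNl u v : dotv (- u) v = - dotv u v.
Proof. by rewrite -scaleN1r dotvZl mulN1r. Qed.
Lemma dotvNr u v : dotv v (- u) = - dotv v u.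
Proof. by rewrite dotvC dotvNl dotvC. Qed.
Lemma dotvBl u v w : dotv (u - v) w = dotv u w - dotv v w.
Proof. by rewrite dotvDl dotvNl. Qed.
Lemma dotvBr u v w : dotv w (u - v) = dotv w u - dotv w v.
Proof. by rewrite dotvDr dotvNr. Qed.
Lemma dotv0l v : dotv 0 v = 0.
Proof. by rewrite /dotv big1 // => l _; rewrite mxE mul0r. Qed.
Lemma dotv_suml (T : finType) (P : pred T) (F : T -> 'rV[R]_p) v :
  dotv (\sum_(t | P t) F t) v = \sum_(t | P t) dotv (F t) v.
Proof.
apply: (big_morph (fun x => dotv x v)) => [a b|]; [exact: dotvDl | exact: dotv0l].
Qed.
Lemma dotv_sumr (T : finType) (P : pred T) (F : T -> 'rV[R]_p) v :
  dotv v (\sum_(t | P t) F t) = \sum_(t | P t) dotv v (F t).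
Proof. by rewrite dotvC dotv_suml; apply: eq_bigr => t _; rewrite dotvC. Qed.

Lemma sqnorm_ge0 v : 0 <= sqnorm v.
Proof. by apply: sumr_ge0 => l _; rewrite sqr_ge0. Qed.
Lemma sqnormD u v : sqnorm (u + v) = sqnorm u + 2 * dotv u v + sqnorm v.
Proof. rewrite !sqnormE dotvDl !dotvDr (dotvC v u); ring. Qed.
Lemma sqnormB u v : sqnorm (u - v) = sqnorm u - 2 * dotv u v + sqnorm v.
Proof. rewrite !sqnormE dotvDl !dotvDr !dotvNl !dotvNr (dotvC v u); ring. Qed.
Lemma sqnormZ a v : sqnorm (a *: v) = a ^+ 2 * sqnorm v.
Proof. rewrite !sqnormE dotvZl dotvZr; ring. Qed.
Lemma sqnormN v : sqnorm (- v) = sqnorm v.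
Proof. by rewrite -scaleN1r sqnormZ sqrrN expr1n mul1r. Qed.
Lemma sqnormBC u v : sqnorm (u - v) = sqnorm (v - u).
Proof. by rewrite -sqnormN opprB. Qed.

Lemma young u v c : 0 < c -> 2 * dotv u v <= c^-1 * sqnorm u + c * sqnorm v.
Proof.
move=> c0; have := sqnorm_ge0 (u - c *: v).
rewrite sqnormB sqnormZ dotvZr => h.
have h2 : 0 <= c^-1 * (sqnorm u - 2 * (c * dotv u v) + c ^+ 2 * sqnorm v).
  by rewrite mulr_ge0 // invr_ge0 ltW.
rewrite -subr_ge0.
have -> : c^-1 * sqnorm u + c * sqnorm v - 2 * dotv u v =
   c^-1 * (sqnorm u - 2 * (c * dotv u v) + c ^+ 2 * sqnorm v).
  by field; rewrite gt_eqF.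
exact: h2.
Qed.

Lemma sqnorm_le_add u v c : 0 < c ->
  sqnorm (u + v) <= (1 + c) * sqnorm u + (1 + c^-1) * sqnorm v.
Proof.
move=> c0; rewrite sqnormD.
have := young u v (c := c^-1); rewrite invr_gt0 invrK => /(_ c0) h.
by rewrite !mulrDl !mul1r; lra.
Qed.
Lemma sqnorm_le_sub u v c : 0 < c ->
  sqnorm (u - v) <= (1 + c) * sqnorm u + (1 + c^-1) * sqnorm v.
Proof. by move=> c0; rewrite -(sqnormN v); apply: sqnorm_le_add. Qed.

Definition avg (T : finType) (F : T -> R) := #|T|%:R^-1 * \sum_t F t.
Definition avgv (T : finType) (F : T -> 'rV[R]_p) := #|T|%:R^-1 *: \sum_t F t.

Lemma avgD (T : finType) (F G : T -> R) :
  avg (fun t => F t + G t) = avg F + avg G.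
Proof. by rewrite /avg big_split mulrDr. Qed.
Lemma avgB (T : finType) (F G : T -> R) :
  avg (fun t => F t - G t) = avg F - avg G.
Proof. by rewrite /avg sumrB mulrBr. Qed.
Lemma avgZ (T : finType) (F : T -> R) c :
  avg (fun t => c * F t) = c * avg F.
Proof. by rewrite /avg -mulr_sumr mulrCA. Qed.
Lemma avgZr (T : finType) (F : T -> R) c :
  avg (fun t => F t * c) = avg F * c.
Proof. by rewrite /avg -mulr_suml mulrA. Qed.
Lemma avg_const (T : finType) c : (0 < #|T|)%N -> avg (fun _ : T => c) = c.
Proof.
move=> T0; rewrite /avg sumr_const (_ : #|xpredT| = #|T|) // -[c *+ _]mulr_natl mulrA mulVf ?mul1r //.
by rewrite pnatr_eq0 -lt0n.
Qed.
Lemma avg_le (T : finType) (F G : T -> R) :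
  (forall t, F t <= G t) -> avg F <= avg G.
Proof.
move=> h; rewrite /avg ler_wpM2l ?invr_ge0 ?ler0n //.
by apply: ler_sum => t _.
Qed.
Lemma avg_ge0 (T : finType) (F : T -> R) :
  (forall t, 0 <= F t) -> 0 <= avg F.
Proof.
move=> h; rewrite /avg mulr_ge0 ?invr_ge0 ?ler0n //.
by apply: sumr_ge0 => t _.
Qed.
Lemma avg_ord (k : nat) (F : 'I_k -> R) : avg F = k%:R^-1 * \sum_(i < k) F i.
Proof. by rewrite /avg card_ord. Qed.
Lemma avgv_ord (k : nat) (F : 'I_k -> 'rV[R]_p) :
  avgv F = k%:R^-1 *: \sum_(i < k) F i.
Proof. by rewrite /avgv card_ord. Qed.

Lemma avg_dotl (T : finType) (F : T -> 'rV[R]_p) v :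
  avg (fun t => dotv (F t) v) = dotv (avgv F) v.
Proof. by rewrite /avg /avgv dotvZl dotv_suml. Qed.

Lemma bias_var (T : finType) (F : T -> 'rV[R]_p) : (0 < #|T|)%N ->
  avg (fun t => sqnorm (F t)) =
  sqnorm (avgv F) + avg (fun t => sqnorm (F t - avgv F)).
Proof.
move=> T0.
have -> : (fun t => sqnorm (F t - avgv F)) =
  (fun t => sqnorm (F t) - 2 * dotv (F t) (avgv F) + sqnorm (avgv F)).
  by apply: funext => t; rewrite sqnormB.
rewrite avgD avgB avgZ avg_dotl avg_const // -sqnormE; ring.
Qed.

Lemma jensen (T : finType) (F : T -> 'rV[R]_p) : (0 < #|T|)%N ->
  sqnorm (avgv F) <= avg (fun t => sqnorm (F t)).
Proof.
move=> T0; rewrite bias_var // lerDl; apply: avg_ge0 => t; exact: sqnorm_ge0.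
Qed.

End Vec.


Section Ffun.
Variables (R : realType) (n m : nat).
Local Notation FF := {ffun 'I_n -> 'I_m}.

Lemma sum_ffun_prod (F : 'I_n -> 'I_m -> R) :
  \sum_(t : FF) \prod_k F k (t k) = \prod_k \sum_j F k j.
Proof. by rewrite bigA_distr_bigA. Qed.

Lemma sum_ffun1 (i : 'I_n) (h : 'I_m -> R) :
  \sum_(t : FF) h (t i) =
  (\sum_j h j) * \prod_(k | k != i) \sum_(j : 'I_m) (1 : R).
Proof.
pose F k j := if k == i then h j else 1.
have e : forall t : FF, h (t i) = \prod_k F k (t k).
  move=> t; rewrite (bigD1 i) //= /F eqxx big1 ?mulr1 // => k /negbTE ->.
  done.
rewrite (eq_bigr _ (fun t _ => e t)) sum_ffun_prod (bigD1 i) //= /F eqxx.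
by congr (_ * _); apply: eq_bigr => k /negbTE ->.
Qed.

Lemma avg_ffun1 (i : 'I_n) (h : 'I_m -> R) : (0 < m)%N ->
  avg (fun t : FF => h (t i)) = avg h.
Proof.
move=> m0; rewrite /avg sum_ffun1.
have := sum_ffun1 i (fun _ => 1); rewrite !sumr_const !card_ord.
set P := \prod_(k | _) _ => hP.
have c : #|FF|%:R = (m%:R * P : R).
  by rewrite -hP -[LHS]mulr1n.
rewrite c invfM mulrAC mulrA mulrAC -mulrA mulVf ?mulr1 //.
apply/eqP => P0; move: c; rewrite P0 mulr0 => /eqP; rewrite pnatr_eq0.
by rewrite card_ffun !card_ord expn_eq0 -[m == 0%N]negbK -lt0n m0.
Qed.

Lemma sum_ffun2 (i i' : 'I_n) (a b : 'I_m -> R) : i != i' ->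
  \sum_j b j = 0 -> \sum_(t : FF) a (t i) * b (t i') = 0.
Proof.
move=> ii' b0.
pose F k j := if k == i then a j else if k == i' then b j else 1.
have e : forall t : FF, a (t i) * b (t i') = \prod_k F k (t k).
  move=> t; rewrite (bigD1 i) //= (bigD1 i') //=; last by rewrite eq_sym.
  rewrite /F eqxx eq_sym (negbTE ii') eqxx big1 ?mulr1 //.
  by move=> k /andP[/negbTE -> /negbTE ->].
rewrite (eq_bigr _ (fun t _ => e t)) sum_ffun_prod (bigD1 i') //= /F eqxx.
by rewrite eq_sym (negbTE ii') b0 mul0r.
Qed.

Lemma avg_sum (T : finType) (I : finType) (F : I -> T -> R) :
  avg (fun t => \sum_i F i t) = \sum_i avg (F i).
Proof. by rewrite /avg exchange_big /= mulr_sumr. Qed.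

Variable (p : nat).

Lemma avgv_ffun1 (i : 'I_n) (h : 'I_m -> 'rV[R]_p) : (0 < m)%N ->
  avgv (fun t : FF => h (t i)) = avgv h.
Proof.
move=> m0; apply/rowP => l; rewrite /avgv !mxE !summxE.
have := avg_ffun1 i (fun j => h j 0 l) m0; rewrite /avg => ->.
by rewrite card_ord.
Qed.

Lemma indep (d : 'I_n -> 'I_m -> 'rV[R]_p) : (0 < m)%N ->
  (forall i, \sum_j d i j = 0) ->
  avg (fun t : FF => sqnorm (\sum_i d i (t i))) =
  \sum_i avg (fun j => sqnorm (d i j)).
Proof.
move=> m0 d0.
have -> : (fun t : FF => sqnorm (\sum_i d i (t i))) = (fun t =>
    \sum_i \sum_i' dotv (d i (t i)) (d i' (t i'))).
  apply: funext => t; rewrite sqnormE dotv_suml; apply: eq_bigr => i _.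
  by rewrite dotv_sumr.
rewrite avg_sum.
apply: eq_bigr => i _; rewrite avg_sum (bigD1 i) //= big1 ?addr0.
  rewrite -(avg_ffun1 i (fun j => sqnorm (d i j)) m0).
  by congr avg; apply: funext => t; rewrite sqnormE.
move=> i' ii'; rewrite /avg /dotv exchange_big /= big1 ?mulr0 // => l _.
apply: (@sum_ffun2 i i' (fun j => d i j 0 l) (fun j => d i' j 0 l)).
  by rewrite eq_sym.
by have := congr1 (fun M : 'rV[R]_p => M 0 l) (d0 i'); rewrite summxE mxE.
Qed.

End Ffun.


Section Desc.
Variables (R : realType) (p : nat).

Lemma is_derive_line (F : 'rV[R]_p -> R) (x d : 'rV[R]_p) (t : R) (D : R) :
  differentiable F (x + t *: d) -> 'd F (x + t *: d) d = D ->
  is_derive t 1 (fun s => F (x + s *: d)) D.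
Proof.
move=> dF eD.
have ef : (fun h : R => h^-1 *: (((fun s => F (x + s *: d)) \o shift t) (h *: 1)
            - F (x + t *: d))) =
          (fun h : R => h^-1 *: ((F \o shift (x + t *: d)) (h *: d) - F (x + t *: d))).
  apply: funext => h /=; congr (_ *: (F _ - _)).
  by rewrite [h *: 1]mulr1 scalerDl addrCA addrA.
have dv : derivable F (x + t *: d) d by exact: diff_derivable.
apply: DeriveDef.
  by rewrite /derivable ef.
by rewrite /derive ef -/(derive F _ d) deriveE.
Qed.

End Desc.

Section Desc2.
Variables (R : realType) (n m p : nat).
Variables (f : 'I_n -> 'I_m -> 'rV[R]_p -> R)
  (gf : 'I_n -> 'I_m -> 'rV[R]_p -> 'rV[R]_p) (L : R).

Definition gradF (x : 'rV[R]_p) :=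
  n%:R^-1 *: \sum_(i < n) (m%:R^-1 *: \sum_(j < m) gf i j x).

Lemma avgvB (T : finType) (F G : T -> 'rV[R]_p) :
  avgv (fun t => F t - G t) = avgv F - avgv G.
Proof. by rewrite /avgv sumrB scalerBr. Qed.

Lemma gradF_lip (x y : 'rV[R]_p) : (0 < n)%N -> (0 < m)%N ->
  (forall i j x y, sqnorm (gf i j x - gf i j y) <= L ^+ 2 * sqnorm (x - y)) ->
  sqnorm (gradF y - gradF x) <= L ^+ 2 * sqnorm (y - x).
Proof.
move=> n0 m0 HL.
have -> : gradF y - gradF x =
  avgv (fun i : 'I_n => avgv (fun j : 'I_m => gf i j y - gf i j x)).
  rewrite /gradF -!avgv_ord -avgvB; congr avgv; apply: funext => i.
  by rewrite avgvB !avgv_ord.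
apply: le_trans; first by apply: jensen; rewrite card_ord.
have -> : L ^+ 2 * sqnorm (y - x) =
  avg (fun i : 'I_n => avg (fun j : 'I_m => L ^+ 2 * sqnorm (y - x))).
  by rewrite !avg_const ?card_ord.
apply: avg_le => i; apply: le_trans; first by apply: jensen; rewrite card_ord.
by apply: avg_le => j; apply: HL.
Qed.

Lemma Fobj_deriv (x d : 'rV[R]_p) (t : R) :
  (forall i j x, differentiable (f i j) x /\
     forall v, 'd (f i j) x v = dotv (gf i j x) v) ->
  is_derive t 1 (fun s => Fobj f (x + s *: d)) (dotv (gradF (x + t *: d)) d).
Proof.
move=> Hd.
have e : (fun s => Fobj f (x + s *: d)) =
  n%:R^-1 *: \sum_(i < n) (m%:R^-1 *: \sum_(j < m) (fun s => f i j (x + s *: d))).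
  apply: funext => s; rewrite /Fobj scalrfctE fct_sumE /=; congr (_ * _).
  apply: eq_bigr => i _; rewrite scalrfctE fct_sumE /=; congr (_ * _).
rewrite e.
have -> : dotv (gradF (x + t *: d)) d =
  n%:R^-1 *: \sum_(i < n) (m%:R^-1 *: \sum_(j < m) dotv (gf i j (x + t *: d)) d).
  rewrite /gradF dotvZl dotv_suml; congr (_ * _); apply: eq_bigr => i _.
  by rewrite dotvZl dotv_suml.
apply: is_deriveZ; apply: is_derive_sum => i.
apply: is_deriveZ; apply: is_derive_sum => j.
have [D1 D2] := Hd i j (x + t *: d).
exact: is_derive_line.
Qed.

End Desc2.

Section Desc3.
Variables (R : realType) (n m p : nat).
Variables (f : 'I_n -> 'I_m -> 'rV[R]_p -> R)
  (gf : 'I_n -> 'I_m -> 'rV[R]_p -> 'rV[R]_p) (L : R).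

Lemma descent (x : 'rV[R]_p) (Fs : R) : (0 < n)%N -> (0 < m)%N -> 0 < L ->
  (forall i j x, differentiable (f i j) x /\
     forall v, 'd (f i j) x v = dotv (gf i j x) v) ->
  (forall i j x y, sqnorm (gf i j x - gf i j y) <= L ^+ 2 * sqnorm (x - y)) ->
  (forall y, Fs <= Fobj f y) ->
  sqnorm (gradF gf x) <= 4 * L * (Fobj f x - Fs).
Proof.
move=> n0 m0 L0 Hd HL Hinf.
set g := gradF gf x.
set d := - (2 * L)^-1 *: g.
have hder := fun t => Fobj_deriv x d t Hd.
have [c c01 hc] := MVT (@ltr01 R) (fun t _ => hder t)
  (derivable_within_continuous (fun t _ => @ex_derive _ _ _ _ _ _ _ (hder t))).
move: hc; rewrite scale0r addr0 scale1r subr0 mulr1.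
set y := x + c *: d => hc.
have c0 : 0 < c by move: c01; rewrite in_itv /= => /andP[].
have c1 : c < 1 by move: c01; rewrite in_itv /= => /andP[].
have e1 : dotv (gradF gf y) d = dotv g d + dotv (gradF gf y - g) d.
  by rewrite dotvBl addrC subrK.
have e2 : dotv g d = - (2 * L)^-1 * sqnorm g.
  by rewrite /d dotvZr sqnormE.
have hy : 2 * dotv (gradF gf y - g) d <= L^-1 * sqnorm (gradF gf y - g) + L * sqnorm d.
  exact: young.
have hl : sqnorm (gradF gf y - g) <= L ^+ 2 * sqnorm d.
  apply: le_trans; first exact: gradF_lip.
  rewrite /y addrC addKr sqnormZ ler_wpM2l ?sqr_ge0 //.
  rewrite -[X in _ <= X]mul1r ler_wpM2r ?sqnorm_ge0 //.
  by rewrite expr2; nra.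
have sd : sqnorm d = (2 * L)^-2 * sqnorm g.
  by rewrite /d sqnormZ sqrrN exprVn.
have hF := Hinf (x + d).
have SG := sqnorm_ge0 g.
set S := sqnorm g in e2 sd SG *.
have hl2 : L^-1 * sqnorm (gradF gf y - g) <= L * sqnorm d.
  rewrite -(ler_pM2l L0) mulrA mulfV ?gt_eqF // mul1r.
  by apply: le_trans hl _; rewrite expr2 -mulrA.
have key : Fobj f (x + d) - Fobj f x <= - (4 * L)^-1 * S.
  rewrite hc e1 e2.
  have : dotv (gradF gf y - g) d <= L * sqnorm d by lra.
  rewrite sd => h2.
  have -> : - (4 * L)^-1 * S = - (2 * L)^-1 * S + L * ((2 * L) ^- 2 * S).
    by field; rewrite gt_eqF.
  lra.
have : S / (4 * L) <= Fobj f x - Fs.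
  have -> : S / (4 * L) = - (- (4 * L)^-1 * S) by rewrite mulNr opprK mulrC.
  lra.
rewrite ler_pdivrMr ?mulr_gt0 // => h.
by rewrite mulrC.
Qed.

End Desc3.


Section Traj.
Variables (R : realType) (n m p : nat).
Variables (gf : 'I_n -> 'I_m -> 'rV[R]_p -> 'rV[R]_p) (W : 'M[R]_n) (alpha : R).

Definition gfun (st : state R n m p) (tau : {ffun 'I_n -> 'I_m}) (i : 'I_n) :=
  gf i (tau i) (sx st i) - gf i (tau i) (sz st i (tau i))
  + m%:R^-1 *: \sum_j gf i j (sz st i j).

Lemma colsum (V : 'I_n -> 'rV[R]_p) : (forall r, \sum_i W i r = 1) ->
  \sum_i \sum_r W i r *: V r = \sum_r V r.
Proof.
move=> cs; rewrite exchange_big /=; apply: eq_bigr => r _.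
by rewrite -scaler_suml cs scale1r.
Qed.

Lemma inv_sum x0 omega k : (forall r, \sum_i W i r = 1) ->
  \sum_i sy (gt_saga gf W alpha x0 omega k) i =
  \sum_i sg (gt_saga gf W alpha x0 omega k) i.
Proof.
move=> cs; elim: k => [|k IH] /=; first by rewrite !big1.
rewrite (colsum (fun r => _ + _ - _)) // sumrB big_split /= IH.
by rewrite addrAC subrr add0r.
Qed.

Lemma xbar_step st d : (forall r, \sum_i W i r = 1) ->
  \sum_i sy st i = \sum_i sg st i ->
  xbar (step gf W alpha st d) =
  xbar st - alpha *: (n%:R^-1 *: \sum_i gfun st d.1 i).
Proof.
move=> cs inv; rewrite /xbar /= (colsum (fun r => _ - _)) // sumrB.
rewrite -scaler_sumr (colsum (fun r => _ + _ - _)) // sumrB big_split /= inv.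
rewrite addrAC subrr add0r scalerBr !scalerA mulrC.
done.
Qed.

Lemma prefix x0 omega k d k' : (k' <= k)%N ->
  gt_saga gf W alpha x0 (fun t => if t == k then d else omega t) k' =
  gt_saga gf W alpha x0 omega k'.
Proof.
elim: k' => [//|k' IH] hk /=.
rewrite IH ?(ltnW hk) //.
by rewrite (_ : (k' == k) = false) // ltn_eqF.
Qed.

End Traj.


Section AvgV.
Variables (R : realType) (p : nat).
Lemma avgvD (T : finType) (F G : T -> 'rV[R]_p) :
  avgv (fun t => F t + G t) = avgv F + avgv G.
Proof. by rewrite /avgv big_split scalerDr. Qed.
Lemma avgvZ (T : finType) (F : T -> 'rV[R]_p) c :
  avgv (fun t => c *: F t) = c *: avgv F.
Proof. by rewrite /avgv -scaler_sumr !scalerA mulrC. Qed.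
Lemma avgv_const (T : finType) (v : 'rV[R]_p) : (0 < #|T|)%N -> avgv (fun _ : T => v) = v.
Proof.
move=> T0; rewrite /avgv sumr_const (_ : #|xpredT| = #|T|) // -[v *+ _]scaler_nat scalerA mulVf ?scale1r //.
by rewrite pnatr_eq0 -lt0n.
Qed.
Lemma avgv_sum (T I : finType) (F : I -> T -> 'rV[R]_p) :
  avgv (fun t => \sum_i F i t) = \sum_i avgv (F i).
Proof. by rewrite /avgv exchange_big /= scaler_sumr. Qed.
Lemma avgv_swap (T I : finType) (F : I -> T -> 'rV[R]_p) :
  avgv (fun t => avgv (fun i => F i t)) = avgv (fun i => avgv (F i)).
Proof.
rewrite /avgv -[in LHS]scaler_sumr -[in RHS]scaler_sumr exchange_big /=.
by rewrite !scalerA mulrC.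
Qed.
Lemma avg_swap (T I : finType) (F : I -> T -> R) :
  avg (fun t => avg (fun i => F i t)) = avg (fun i => avg (F i)).
Proof.
rewrite /avg -[in LHS]mulr_sumr -[in RHS]mulr_sumr exchange_big /=.
by rewrite !mulrA [_ * #|T|%:R^-1]mulrC.
Qed.
End AvgV.

Section Step.
Variables (R : realType) (n m p : nat).
Variables (gf : 'I_n -> 'I_m -> 'rV[R]_p -> 'rV[R]_p) (st : state R n m p) (alpha L : R).
Hypotheses (n0 : (0 < n)%N) (m0 : (0 < m)%N).
Local Notation FF := {ffun 'I_n -> 'I_m}.

Definition hh (i : 'I_n) (j : 'I_m) :=
  gf i j (sx st i) - gf i j (sz st i j) + m%:R^-1 *: \sum_j' gf i j' (sz st i j').
Definition gb (tau : FF) := n%:R^-1 *: \sum_i gfun gf st tau i.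
Definition mu := avgv (fun i : 'I_n => avgv (fun j : 'I_m => gf i j (sx st i))).
Definition Vv := avg (fun tau : FF => sqnorm (gb tau - mu)).

Lemma card_FF : (0 < #|FF|)%N.
Proof. by rewrite card_ffun !card_ord expn_gt0 m0. Qed.

Lemma gbE tau : gb tau = avgv (fun i => hh i (tau i)).
Proof. by rewrite /gb avgv_ord. Qed.

Lemma avgv_hh i : avgv (hh i) = avgv (fun j => gf i j (sx st i)).
Proof.
rewrite /hh avgvD avgvB avgv_const ?card_ord // -avgv_ord.
by rewrite subrK.
Qed.

Lemma avgv_gb : avgv gb = mu.
Proof.
have -> : gb = fun tau => avgv (fun i => hh i (tau i)).
  by apply: funext => tau; rewrite gbE.
rewrite avgv_swap /mu; congr avgv; apply: funext => i.
by rewrite avgv_ffun1 // avgv_hh.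
Qed.

Lemma BV u : avg (fun tau : FF => sqnorm (u - alpha *: gb tau)) =
  sqnorm (u - alpha *: mu) + alpha ^+ 2 * Vv.
Proof.
rewrite bias_var ?card_FF //.
have -> : avgv (fun tau => u - alpha *: gb tau) = u - alpha *: mu.
  by rewrite avgvB avgv_const ?card_FF // avgvZ avgv_gb.
congr (_ + _); rewrite /Vv -avgZ; congr avg; apply: funext => tau.
have e : forall x y z : 'rV[R]_p, x - y - (x - z) = - (y - z).
  by move=> x y z; rewrite !opprB [LHS]addrC addrA subrK.
by rewrite e sqnormN -scalerBr sqnormZ.
Qed.

Lemma V_bound :
  (forall i j x y, sqnorm (gf i j x - gf i j y) <= L ^+ 2 * sqnorm (x - y)) ->
  Vv <= n%:R^-1 * (L ^+ 2 *
    avg (fun i : 'I_n => avg (fun j : 'I_m => sqnorm (sx st i - sz st i j)))).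
Proof.
move=> HL.
pose D i j := gf i j (sx st i) - gf i j (sz st i j).
pose dd i j := D i j - avgv (D i).
have ehh : forall i j, hh i j - avgv (fun j => gf i j (sx st i)) = dd i j.
  move=> i j; rewrite /dd /hh /D avgvB -avgv_ord.
  rewrite opprB; set a := gf i j _; set b := gf i j _.
  set c := avgv _; set e := avgv _.
  by rewrite -!addrA; congr (_ + _); rewrite addrC -!addrA; congr (_ + _); rewrite addrC.
have e : forall tau, gb tau - mu = n%:R^-1 *: \sum_i dd i (tau i).
  move=> tau; rewrite gbE /mu -avgvB avgv_ord; congr (_ *: _).
  by apply: eq_bigr => i _; rewrite ehh.
have sum0 : forall i, \sum_j dd i j = 0.
  move=> i; rewrite /dd sumrB sumr_const card_ord /avgv card_ord.
  rewrite -scaler_nat scalerA mulfV ?scale1r ?subrr //.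
  by rewrite pnatr_eq0 -lt0n.
have -> : Vv = n%:R^-1 ^+ 2 * \sum_i avg (fun j => sqnorm (dd i j)).
  rewrite /Vv -indep // -avgZ; congr avg; apply: funext => tau.
  by rewrite e sqnormZ.
have hi : forall i, avg (fun j => sqnorm (dd i j)) <=
    L ^+ 2 * avg (fun j : 'I_m => sqnorm (sx st i - sz st i j)).
  move=> i; apply: (@le_trans _ _ (avg (fun j => sqnorm (D i j)))).
    by rewrite (bias_var (D i)) ?card_ord // lerDr sqnorm_ge0.
  rewrite -avgZ; apply: avg_le => j; exact: HL.
apply: (@le_trans _ _ (n%:R^-1 ^+ 2 * \sum_i (L ^+ 2 *
          avg (fun j : 'I_m => sqnorm (sx st i - sz st i j))))).
  rewrite ler_wpM2l ?exprn_ge0 ?invr_ge0 ?ler0n //.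
  by apply: ler_sum => i _; apply: hi.
by rewrite -avgZ avg_ord mulrA expr2.
Qed.

End Step.


Section Misc.
Variable (R : realType).
Lemma eq_avg (T : finType) (F G : T -> R) : (forall t, F t = G t) -> avg F = avg G.
Proof. by move=> h; congr avg; apply: funext. Qed.
Lemma avg_lin (T : finType) (F : T -> R) a b : (0 < #|T|)%N ->
  avg (fun t => a * F t + b) = a * avg F + b.
Proof. by move=> T0; rewrite avgD avgZ avg_const. Qed.
Lemma avg_if (m : nat) (j : 'I_m) (A B : R) : (0 < m)%N ->
  avg (fun j' : 'I_m => if j == j' then A else B) = m%:R^-1 * A + (1 - m%:R^-1) * B.
Proof.
move=> m0.
have -> : (fun j' : 'I_m => if j == j' then A else B) =
   (fun j' => B + (if j == j' then A - B else 0)).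
  by apply: funext => j'; case: eqP => _; rewrite ?addr0 // addrC subrK.
rewrite avgD avg_const ?card_ord // /avg card_ord -big_mkcond /=.
rewrite (big_pred1 j); last by move=> j'; rewrite /= eq_sym.
by rewrite mulrBr mulrBl mul1r addrCA addrA.
Qed.
Lemma avg_comb (T : finType) (F G : T -> R) a b c d : (0 < #|T|)%N ->
  avg (fun t => a * (b * F t + c) + d * G t) = a * (b * avg F + c) + d * avg G.
Proof. by move=> T0; rewrite avgD avgZ avg_lin // avgZ. Qed.
Lemma avg_lin2 (T : finType) (F G : T -> R) a b :
  avg (fun t => a * F t + b * G t) = a * avg F + b * avg G.
Proof. by rewrite avgD !avgZ. Qed.
End Misc.

Local Open Scope classical_set_scope.

Theorem lemma19 (R : realType) (n m p : nat)
  (f : 'I_n -> 'I_m -> 'rV[R]_p -> R)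
  (gf : 'I_n -> 'I_m -> 'rV[R]_p -> 'rV[R]_p)
  (L : R) (W : 'M[R]_n) (alpha : R) (x0 : 'rV[R]_p) :
  (0 < n)%N -> (0 < m)%N -> (0 < p)%N ->
  (forall i j x, differentiable (f i j) x /\
     forall v, 'd (f i j) x v = dotv (gf i j x) v) ->
  0 < L ->
  (forall i j x y, enorm (gf i j x - gf i j y) <= L * enorm (x - y)) ->
  (exists M : R, forall x, M <= Fobj f x) ->
  nonneg_mx W -> primitive_mx W -> doubly_stochastic W ->
  0 < alpha ->
  alpha <= Num.sqrt n%:R / (Num.sqrt (8 * m%:R) * L) ->
  let Fstar := inf [set Fobj f x | x in setT] in
  forall (k : nat) (omega : nat -> draw n m),
    let st := gt_saga gf W alpha x0 omega k in
    cond_exp_next k (fun w => tk (gt_saga gf W alpha x0 w k.+1)) omega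
    <= (1 - (4 * m%:R)^-1) * tk st
       + 16 * m%:R * alpha ^+ 2 * L * (Fobj f (xbar st) - Fstar)
       + (8 * m%:R * alpha ^+ 2 * L ^+ 2 + 9 / (4 * m%:R))
         * (n%:R^-1 * consensus_err st).
Proof.
move=> n0 m0 p0 Hd L0 HLe [M0 HM] _ _ [rs cs] a0 ale Fstar k omega; cbv zeta; set st := gt_saga gf W alpha x0 omega k.
have HL : forall i j x y, sqnorm (gf i j x - gf i j y) <= L ^+ 2 * sqnorm (x - y).
  move=> i j x y; have h := HLe i j x y.
  have h2 := ler_pM (sqrtr_ge0 _) (sqrtr_ge0 _) h h.
  rewrite /enorm mulrACA -!expr2 !sqr_sqrtr ?sqnorm_ge0 // in h2.
have Fs_le : forall y, Fstar <= Fobj f y.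
  move=> y; apply: ge_inf; last by exists y.
  by exists M0 => _ [x _ <-].
have inv := inv_sum gf alpha x0 omega k cs.
rewrite -/st in inv.
pose FF := {ffun 'I_n -> 'I_m}.
have eA : cond_exp_next k (fun w => tk (gt_saga gf W alpha x0 w k.+1)) omega =
  avg (fun tau : FF => avg (fun s : FF => tk (step gf W alpha st (tau, s)))).
  rewrite /cond_exp_next /=.
  have -> : \sum_(d : draw n m) tk (step gf W alpha
       (gt_saga gf W alpha x0 (fun t => if t == k then d else omega t) k)
       (if k == k then d else omega k)) =
     \sum_(d : draw n m) tk (step gf W alpha st d).
    by apply: eq_bigr => d _; rewrite prefix // eqxx.
  have -> : \sum_(d : draw n m) tk (step gf W alpha st d) =
     \sum_(tau : FF) \sum_(s : FF) tk (step gf W alpha st (tau, s)).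
    by rewrite pair_bigA; apply: eq_bigr => -[tau s] _.
  rewrite /avg card_prod natrM invfM -mulrA; congr (_ * _).
  by rewrite mulr_sumr.
have eB : forall tau : FF,
  avg (fun s : FF => tk (step gf W alpha st (tau, s))) =
  avg (fun i : 'I_n => m%:R^-1 * sqnorm (xbar st - sx st i - alpha *: gb gf st tau)
     + (1 - m%:R^-1) * avg (fun j : 'I_m =>
          sqnorm (xbar st - sz st i j - alpha *: gb gf st tau))).
  move=> tau.
  have ex : forall s, xbar (step gf W alpha st (tau, s)) =
      xbar st - alpha *: gb gf st tau.
    by move=> s; rewrite xbar_step.
  set P := xbar st - alpha *: gb gf st tau.
  have et : forall s : FF, tk (step gf W alpha st (tau, s)) =
      avg (fun i : 'I_n => avg (fun j : 'I_m =>
        sqnorm (P - (if j == s i then sx st i else sz st i j)))).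
    move=> s; rewrite /tk ex avg_ord; congr (_ * _); apply: eq_bigr => i _.
    by rewrite avg_ord.
  rewrite (eq_avg et) avg_swap; apply: eq_avg => i; rewrite avg_swap.
  have ej : forall j : 'I_m,
      avg (fun s : FF => sqnorm (P - (if j == s i then sx st i else sz st i j))) =
      m%:R^-1 * sqnorm (P - sx st i) + (1 - m%:R^-1) * sqnorm (P - sz st i j).
    move=> j.
    rewrite (avg_ffun1 i (fun j' => sqnorm (P - (if j == j' then sx st i else sz st i j)))) //.
    rewrite -(avg_if j) //; apply: eq_avg => j'; by case: eqP.
  rewrite (eq_avg ej) avgD avg_const ?card_ord // avgZ /P.
  congr (_ * _ + _ * _); first by rewrite addrAC.
  by apply: eq_avg => j; rewrite addrAC.
set mu0 := mu gf st.
set V0 := Vv gf st.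
have eC : avg (fun tau : FF => avg (fun i : 'I_n =>
      m%:R^-1 * sqnorm (xbar st - sx st i - alpha *: gb gf st tau)
     + (1 - m%:R^-1) * avg (fun j : 'I_m =>
          sqnorm (xbar st - sz st i j - alpha *: gb gf st tau)))) =
   avg (fun i : 'I_n => m%:R^-1 * (sqnorm (xbar st - sx st i - alpha *: mu0) + alpha ^+ 2 * V0)
     + (1 - m%:R^-1) * avg (fun j : 'I_m =>
          sqnorm (xbar st - sz st i j - alpha *: mu0) + alpha ^+ 2 * V0)).
  rewrite (avg_swap (fun (i : 'I_n) (tau : FF) => m%:R^-1 * sqnorm (xbar st - sx st i - alpha *: gb gf st tau)
     + (1 - m%:R^-1) * avg (fun j : 'I_m =>
          sqnorm (xbar st - sz st i j - alpha *: gb gf st tau)))).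
  apply: eq_avg => i; rewrite avgD.
  rewrite (avgZ (fun tau : FF => sqnorm (xbar st - sx st i - alpha *: gb gf st tau))).
  rewrite (avgZ (fun tau : FF => avg (fun j : 'I_m =>
          sqnorm (xbar st - sz st i j - alpha *: gb gf st tau)))).
  rewrite (BV gf st alpha m0).
  rewrite (avg_swap (fun (j : 'I_m) (tau : FF) =>
    sqnorm (xbar st - sz st i j - alpha *: gb gf st tau))).
  congr (_ + _ * _); apply: eq_avg => j; exact: BV.
rewrite eA (eq_avg eB) eC.
have M1 : (1 : R) <= m%:R by rewrite ler1n.
have mi0 : 0 <= (m%:R : R)^-1 by rewrite invr_ge0 ler0n.
have mi1 : 0 <= 1 - (m%:R : R)^-1 by rewrite subr_ge0 invr_le1 ?unitf_gt0 // ltr0n.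
set C := n%:R^-1 * consensus_err st.
set T := tk st.
set D := Fobj f (xbar st) - Fstar.
set G := sqnorm mu0.
set a2 := alpha ^+ 2.
have eCa : C = avg (fun i : 'I_n => sqnorm (xbar st - sx st i)).
  by rewrite /C /consensus_err avg_ord; congr (_ * _); apply: eq_bigr => i _; rewrite sqnormBC.
have eTa : T = avg (fun i : 'I_n => avg (fun j : 'I_m => sqnorm (xbar st - sz st i j))).
  by rewrite /T /tk avg_ord; congr (_ * _); apply: eq_bigr => i _; rewrite avg_ord.
have e54 : (1 + 5/4 : R) = 9/4 by field.
have e45 : (1 + (5/4)^-1 : R) = 9/5 by field.
have hE : avg (fun i : 'I_n => m%:R^-1 * (sqnorm (xbar st - sx st i - alpha *: mu0) + a2 * V0)
     + (1 - m%:R^-1) * avg (fun j : 'I_m =>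
          sqnorm (xbar st - sz st i j - alpha *: mu0) + a2 * V0)) <=
   m%:R^-1 * (9/4 * C + 9/5 * a2 * G + a2 * V0)
      + (1 - m%:R^-1) * ((1 + (2 * m%:R)^-1) * T + (1 + 2 * m%:R) * a2 * G + a2 * V0).
  apply: (@le_trans _ _ (avg (fun i : 'I_n => m%:R^-1 * (9/4 * sqnorm (xbar st - sx st i)
     + (9/5 * a2 * G + a2 * V0)) + (1 - m%:R^-1) * avg (fun j : 'I_m =>
       (1 + (2 * m%:R)^-1) * sqnorm (xbar st - sz st i j)
        + ((1 + 2 * m%:R) * a2 * G + a2 * V0))))).
    apply: avg_le => i; apply: lerD.
      rewrite ler_wpM2l // addrA lerD2r.
      have := @sqnorm_le_sub _ _ (xbar st - sx st i) (alpha *: mu0) (5/4) ltac:(lra).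
      by rewrite sqnormZ e54 e45 mulrA.
    rewrite ler_wpM2l //; apply: avg_le => j; rewrite addrA lerD2r.
    have := @sqnorm_le_sub _ _ (xbar st - sz st i j) (alpha *: mu0) (2 * m%:R)^-1 _.
    rewrite invrK sqnormZ mulrA; apply.
    by rewrite invr_gt0 mulr_gt0 // ltr0n.
  rewrite avg_comb ?card_ord //.
  have ei : forall i : 'I_n, avg (fun j : 'I_m =>
       (1 + (2 * m%:R)^-1) * sqnorm (xbar st - sz st i j)
        + ((1 + 2 * m%:R) * a2 * G + a2 * V0)) =
      (1 + (2 * m%:R)^-1) * avg (fun j : 'I_m => sqnorm (xbar st - sz st i j))
        + ((1 + 2 * m%:R) * a2 * G + a2 * V0).
    by move=> i; rewrite avg_lin ?card_ord.
  rewrite (eq_avg ei) avg_lin ?card_ord // -eCa -eTa.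
  by rewrite !addrA.
have hD : 0 <= D by rewrite subr_ge0.
have hC0 : 0 <= C by rewrite eCa; apply: avg_ge0 => i; exact: sqnorm_ge0.
have hT0 : 0 <= T.
  by rewrite eTa; apply: avg_ge0 => i; apply: avg_ge0 => j; exact: sqnorm_ge0.
have hG0 : 0 <= G := sqnorm_ge0 _.
have hV0 : 0 <= V0 by rewrite /V0 /Vv; apply: avg_ge0 => tau; exact: sqnorm_ge0.
have hG : G <= 2 * L^+2 * C + 8 * L * D.
  set g := gradF gf (xbar st).
  have hmg : sqnorm (mu0 - g) <= L^+2 * C.
    have -> : mu0 - g = avgv (fun i : 'I_n =>
        avgv (fun j : 'I_m => gf i j (sx st i) - gf i j (xbar st))).
      rewrite /mu0 /mu /g /gradF -avgv_ord -avgvB; congr avgv; apply: funext => i.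
      by rewrite avgvB !avgv_ord.
    apply: le_trans; first by apply: jensen; rewrite card_ord.
    rewrite eCa -avgZ; apply: avg_le => i.
    apply: le_trans; first by apply: jensen; rewrite card_ord.
    rewrite -[X in _ <= X](@avg_const R 'I_m) ?card_ord //; apply: avg_le => j.
    by apply: le_trans (HL _ _ _ _) _; rewrite sqnormBC.
  have hgd : sqnorm g <= 4 * L * D := descent (xbar st) n0 m0 L0 Hd HL Fs_le.
  have := sqnorm_le_add (mu0 - g) g (@ltr01 R); rewrite subrK invr1 -/G => h.
  lra.
have hV : V0 <= n%:R^-1 * L^+2 * (2 * C + 2 * T).
  apply: le_trans (V_bound st m0 HL) _.
  rewrite -mulrA ler_wpM2l ?invr_ge0 ?ler0n // ler_wpM2l ?sqr_ge0 //.
  apply: (@le_trans _ _ (avg (fun i : 'I_n => 2 * avg (fun j : 'I_m =>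
      sqnorm (xbar st - sz st i j)) + 2 * sqnorm (xbar st - sx st i)))).
    apply: avg_le => i.
    apply: (@le_trans _ _ (avg (fun j : 'I_m => 2 * sqnorm (xbar st - sz st i j)
        + 2 * sqnorm (xbar st - sx st i)))).
      apply: avg_le => j.
      have e : sx st i - sz st i j = (xbar st - sz st i j) - (xbar st - sx st i).
        by rewrite opprB [RHS]addrC addrA subrK.
      rewrite e; have := sqnorm_le_sub (xbar st - sz st i j) (xbar st - sx st i) (@ltr01 R).
      by rewrite invr1.
    by rewrite avg_lin ?card_ord.
  by rewrite avg_lin2 -eCa -eTa addrC.
have hA : 8 * m%:R * L^+2 * a2 <= n%:R.
  have s8 : 0 < Num.sqrt (8 * m%:R : R) by rewrite sqrtr_gt0 mulr_gt0 // ltr0n.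
  have h1 : alpha * (Num.sqrt (8 * m%:R) * L) <= Num.sqrt n%:R.
    by rewrite -ler_pdivlMr ?mulr_gt0.
  have h0 : 0 <= alpha * (Num.sqrt (8 * m%:R) * L).
    by rewrite !mulr_ge0 // ltW.
  have h2 := ler_pM h0 h0 h1 h1.
  rewrite -!expr2 sqr_sqrtr ?ler0n // !exprMn sqr_sqrtr ?mulr_ge0 ?ler0n // in h2.
  by rewrite mulrC -/a2 in h2.
have N1 : (1 : R) <= n%:R by rewrite ler1n.
exact: (final_arith R _ _ _ _ _ _ _ _ _ _ M1 N1 L0 (sqr_ge0 alpha) hA hC0 hT0 hD hG0 hV0 hE hV hG).
Qed.
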